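(* Let $A=(a_{i,j})$ be an $n\times n$ Monge matrix and $B=(b_{i,j})$ an $n\times n$ Anti-Monge matrix, and consider RecovAP with $c_1(\{u_i,v_j\})=a_{i,j}$, $c_2(\{u_i,v_j\})=b_{i,j}$ and intersection bound $k$ (admitting a feasible solution). Then there is a feasible solution $M_1,M_2$ of minimum cost $c_1(M_1)+c_2(M_2)$ such that all $4$-cycles of $M_1,M_2$ are aligned, any two $4$-cycles are nested (one inside the other), and every $2$-cycle is nested inside every $4$-cycle.
   Context: $K_{n,n}$ has vertex classes $U=\{u_1,\dots,u_n\}$, $V=\{v_1,\dots,v_n\}$. RecovAP: find perfect matchings $M_1,M_2$ of $K_{n,n}$ with $|M_1\cap M_2|\ge k$ minimizing $c_1(M_1)+c_2(M_2)$. $A$ is Monge if $a_{i,j}+a_{k,l}\le a_{i,l}+a_{k,j}$ for all $i<k$, $j<l$; $B$ is Anti-Monge if the reverse inequality holds. For perfect matchings $M_1,M_2$, the multigraph $M_1\cup M_2$ decomposes into $M_1$-$M_2$-alternating cycles; an edge $\{u_i,v_j\}\in M_1\cap M_2$ is called a $2$-cycle $(i,j)$, and an alternating cycle with four edges $\{u_i,v_j\},\{u_{i'},v_{j'}\}\in M_1$, $\{u_i,v_{j'}\},\{u_{i'},v_j\}\in M_2$ is a $4$-cycle $(i,j,i',j')$; it is aligned if $i<i'$ and $j<j'$. An aligned $4$-cycle $(i_1,j_1,i_1',j_1')$ is nested inside an aligned $4$-cycle $(i_2,j_2,i_2',j_2')$ if $i_2<i_1<i_1'<i_2'$ and $j_2<j_1<j_1'<j_2'$;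 a $2$-cycle $(i_1,j_1)$ is nested inside $(i_2,j_2,i_2',j_2')$ if $i_2<i_1<i_2'$ and $j_2<j_1<j_2'$. *)

(* Defs.v *)
From mathcomp Require Import all_boot all_order all_algebra all_fingroup.
Set Implicit Arguments. Unset Strict Implicit. Unset Printing Implicit Defensive.
Import Order.TTheory GRing.Theory Num.Theory.
Local Open Scope ring_scope.

(* A perfect matching of K_{n,n} with classes U = {u_0..u_{n-1}},
   V = {v_0..v_{n-1}} is represented by a permutation s : {perm 'I_n};
   its edge set is { {u_i, v_(s i)} | i }. *)

Definition monge (R : numDomainType) (n : nat) (A : 'M[R]_n) : Prop :=
  forall i k j l : 'I_n, (i < k)%N -> (j < l)%N ->
    A i j + A k l <= A i l + A k j.

Definition antimonge (R : numDomainType) (n : nat) (B : 'M[R]_n) : Prop :=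
  forall i k j l : 'I_n, (i < k)%N -> (j < l)%N ->
    B i j + B k l >= B i l + B k j.

Definition mcost (R : numDomainType) (n : nat) (C : 'M[R]_n) (s : {perm 'I_n}) : R :=
  \sum_(i < n) C i (s i).

(* |M1 ∩ M2| : edge {u_i,v_j} lies in both iff s1 i = j = s2 i *)
Definition common (n : nat) (s1 s2 : {perm 'I_n}) : nat :=
  #|[set i : 'I_n | s1 i == s2 i]|.

Definition feasible (n k : nat) (s1 s2 : {perm 'I_n}) : Prop :=
  (k <= common s1 s2)%N.

Definition recov_cost (R : numDomainType) (n : nat) (A B : 'M[R]_n)
  (s1 s2 : {perm 'I_n}) : R := mcost A s1 + mcost B s2.

Definition two_cycle (n : nat) (s1 s2 : {perm 'I_n}) (i j : 'I_n) : bool :=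
  (s1 i == j) && (s2 i == j).

(* 4-cycle (i,j,i',j'): {u_i,v_j},{u_i',v_j'} ∈ M1 and {u_i,v_j'},{u_i',v_j} ∈ M2,
   these four edges being distinct (i <> i', j <> j'). *)
Definition four_cycle (n : nat) (s1 s2 : {perm 'I_n}) (i j i' j' : 'I_n) : bool :=
  [&& i != i', j != j', s1 i == j, s1 i' == j', s2 i == j' & s2 i' == j].

Definition aligned (n : nat) (i j i' j' : 'I_n) : bool :=
  (i < i')%N && (j < j')%N.

Definition nested4 (n : nat) (i1 j1 i1' j1' i2 j2 i2' j2' : 'I_n) : bool :=
  [&& (i2 < i1)%N, (i1 < i1')%N, (i1' < i2')%N,
      (j2 < j1)%N, (j1 < j1')%N & (j1' < j2')%N].

Definition nested2 (n : nat) (i1 j1 i2 j2 i2' j2' : 'I_n) : bool :=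
  [&& (i2 < i1)%N, (i1 < i2')%N, (j2 < j1)%N & (j1 < j2')%N].

(* Main.v *)
Require Import Defs.
From mathcomp Require Import all_boot all_order all_algebra all_fingroup.
Import Order.TTheory GRing.Theory Num.Theory.
Local Open Scope ring_scope.
From mathcomp Require Import zify ring lra.
Set Implicit Arguments. Unset Strict Implicit.

Section S.
Variables (R : realDomainType) (n : nat).
Implicit Types (s t : {perm 'I_n}).

Definition sw s (x y : 'I_n) : {perm 'I_n} := (tperm x y * s)%g.
Lemma swx s x y : sw s x y x = s y. Proof. by rewrite /sw permM tpermL. Qed.
Lemma swy s x y : sw s x y y = s x. Proof. by rewrite /sw permM tpermR. Qed.
Lemma swo s x y z : z != x -> z != y -> sw s x y z = s z.
Proof. by move=> zx zy; rewrite /sw permM tpermD // eq_sym. Qed.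

Lemma sumR2 (G : 'I_n -> R) x y : x != y ->
  \sum_i G i = G x + G y + \sum_(i | (i != x) && (i != y)) G i.
Proof.
move=> xy; rewrite (bigD1 x) //= (bigD1 y) /=; last by rewrite eq_sym.
by rewrite addrA; congr (_ + _); apply: eq_bigl => i; rewrite andbC.
Qed.

Lemma sumN2 (G : 'I_n -> nat) x y : x != y ->
  (\sum_i G i = G x + G y + \sum_(i | (i != x) && (i != y)) G i)%N.
Proof.
move=> xy; rewrite (bigD1 x) //= (bigD1 y) /=; last by rewrite eq_sym.
by rewrite addnA; congr (_ + _)%N; apply: eq_bigl => i; rewrite andbC.
Qed.

Lemma mcost_sw (C : 'M[R]_n) s x y : x != y ->
  mcost C (sw s x y) + (C x (s x) + C y (s y)) = mcost C s + (C x (s y) + C y (s x)).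
Proof.
move=> xy; rewrite /mcost (sumR2 _ xy) [in RHS](sumR2 _ xy) swx swy.
rewrite (eq_bigr (fun i => C i (s i))); last first.
  by move=> i /andP[ix iy]; rewrite swo.
set S := \sum_(i | _) _; lra.
Qed.

Definition pot (F : 'I_n -> 'I_n -> nat) s := (\sum_i F i (s i))%N.

Lemma pot_sw F s x y : x != y ->
  (pot F (sw s x y) + (F x (s x) + F y (s y)) = pot F s + (F x (s y) + F y (s x)))%N.
Proof.
move=> xy; rewrite /pot (sumN2 _ xy) [in RHS](sumN2 _ xy) swx swy.
rewrite (eq_bigr (fun i => F i (s i))); last first.
  by move=> i /andP[ix iy]; rewrite swo.
set S := (\sum_(i | _) _)%N; lia.
Qed.


Lemma common_sum s1 s2 : common s1 s2 = (\sum_i ((s1 i == s2 i) : nat))%N.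
Proof.
rewrite /common -sum1_card big_mkcond /=; apply: eq_bigr => i _.
by rewrite inE; case: (_ == _).
Qed.

Lemma common_loc s1 s2 t1 t2 (W : seq 'I_n) : uniq W ->
  (forall i, i \notin W -> t1 i = s1 i /\ t2 i = s2 i) ->
  (\sum_(i <- W) ((s1 i == s2 i) : nat) <= \sum_(i <- W) ((t1 i == t2 i) : nat))%N ->
  (common s1 s2 <= common t1 t2)%N.
Proof.
move=> uW out le; rewrite !common_sum (bigID (fun i => i \in W)) /=.
rewrite [X in (_ <= X)%N](bigID (fun i => i \in W)) /= -!big_uniq //.
apply: leq_add => //; rewrite leq_eqVlt; apply/orP; left; apply/eqP.
by apply: eq_bigr => i /out [-> ->].
Qed.

Variables (A B : 'M[R]_n) (HA : monge A) (HB : antimonge B).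

Definition Phi s1 s2 := (pot (fun i j => i * j) s1 + pot (fun i j => i * (n - j)) s2)%N.

Lemma swap1 s1 s2 (x y : 'I_n) : (x < y)%N -> (s1 y < s1 x)%N ->
  recov_cost A B (sw s1 x y) s2 <= recov_cost A B s1 s2 /\
  (Phi s1 s2 < Phi (sw s1 x y) s2)%N.
Proof.
move=> xy sxy; have nxy : x != y by rewrite neq_ltn xy.
split.
  have := mcost_sw A s1 nxy; have := HA xy sxy; rewrite /recov_cost => h1 h2; lra.
have := pot_sw (fun i j => i * j)%N s1 nxy; rewrite /Phi /= => h.
have : (x * s1 x + y * s1 y < x * s1 y + y * s1 x)%N by nia.
lia.
Qed.

Lemma swap2 s1 s2 (x y : 'I_n) : (x < y)%N -> (s2 x < s2 y)%N ->
  recov_cost A B s1 (sw s2 x y) <= recov_cost A B s1 s2 /\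
  (Phi s1 s2 < Phi s1 (sw s2 x y))%N.
Proof.
move=> xy sxy; have nxy : x != y by rewrite neq_ltn xy.
split.
  have := mcost_sw B s2 nxy; have := HB xy sxy; rewrite /recov_cost => h1 h2; lra.
have := pot_sw (fun i j => i * (n - j))%N s2 nxy; rewrite /Phi /= => h.
have lx := ltn_ord (s2 x); have ly := ltn_ord (s2 y).
have : (x * (n - s2 x) + y * (n - s2 y) < x * (n - s2 y) + y * (n - s2 x))%N by nia.
lia.
Qed.


Section Main.
Variables (k : nat) (s1 s2 : {perm 'I_n}).
Hypothesis Hmax : forall t1 t2, (k <= common s1 s2)%N -> (k <= common t1 t2)%N ->
  recov_cost A B t1 t2 <= recov_cost A B s1 s2 -> (Phi t1 t2 <= Phi s1 s2)%N.
Hypothesis Hf : (k <= common s1 s2)%N.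

Lemma no_better t1 t2 : recov_cost A B t1 t2 <= recov_cost A B s1 s2 ->
  (Phi s1 s2 < Phi t1 t2)%N -> (common s1 s2 <= common t1 t2)%N -> False.
Proof.
move=> c p cm; have := Hmax Hf (leq_trans Hf cm) c; rewrite leqNgt p //.
Qed.

Lemma N1 (x y : 'I_n) : (x < y)%N -> (s1 y < s1 x)%N -> (s1 x == s2 x) || (s1 y == s2 y).
Proof.
move=> xy sxy; apply/negPn/negP => /norP [nx ny].
have nxy : x != y by rewrite neq_ltn xy.
have [c p] := swap1 s2 xy sxy.
apply: (no_better c p); apply: (common_loc (W := [:: x; y])).
- by rewrite /= inE nxy.
- by move=> i; rewrite !inE => /norP [ix iy]; rewrite swo.
- by rewrite !big_cons big_nil (negbTE nx) (negbTE ny).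
Qed.

Lemma N2 (x y : 'I_n) : (x < y)%N -> (s2 x < s2 y)%N -> (s1 x == s2 x) || (s1 y == s2 y).
Proof.
move=> xy sxy; apply/negPn/negP => /norP [nx ny].
have nxy : x != y by rewrite neq_ltn xy.
have [c p] := swap2 s1 xy sxy.
apply: (no_better c p); apply: (common_loc (W := [:: x; y])).
- by rewrite /= inE nxy.
- by move=> i; rewrite !inE => /norP [ix iy]; rewrite swo.
- by rewrite !big_cons big_nil (negbTE nx) (negbTE ny).
Qed.

Lemma M3 (x y : 'I_n) : (x < y)%N -> (s1 y < s1 x)%N -> (s2 x < s2 y)%N -> False.
Proof.
move=> xy sxy sxy2.
have nxy : x != y by rewrite neq_ltn xy.
have [c p] := swap1 s2 xy sxy.
have [c' p'] := swap2 (sw s1 x y) xy sxy2.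
apply: (no_better (le_trans c' c) (ltn_trans p p')).
apply: (common_loc (W := [:: x; y])).
- by rewrite /= inE nxy.
- by move=> i; rewrite !inE => /norP [ix iy]; rewrite !swo.
- by rewrite !big_cons !big_nil !swx !swy !addn0 addnC.
Qed.

Lemma chain3 (e a a' : 'I_n) t1 t2 : e != a -> e != a' -> a != a' ->
  (forall i, i != e -> i != a -> i != a' -> t1 i = s1 i /\ t2 i = s2 i) ->
  s1 a != s2 a -> s1 a' != s2 a' ->
  [|| t1 e == t2 e, t1 a == t2 a | t1 a' == t2 a'] ->
  recov_cost A B t1 t2 <= recov_cost A B s1 s2 ->
  (Phi s1 s2 < Phi t1 t2)%N -> False.
Proof.
move=> ea ea' aa' out na na' d c p; apply: (no_better c p).
apply: (common_loc (W := [:: e; a; a'])).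
- by rewrite /= !inE negb_or ea ea' aa'.
- by move=> i; rewrite !inE => /norP [ie /norP [ia ia']]; apply: out.
- rewrite !big_cons !big_nil (negbTE na) (negbTE na') !addn0.
  by move: d; case: (t1 e == t2 e); case: (s1 e == s2 e); case: (t1 a == t2 a); case: (t1 a' == t2 a').
Qed.


Lemma P1 i j i' j' : four_cycle s1 s2 i j i' j' -> aligned i j i' j' \/ aligned i' j' i j.
Proof.
case/and5P => ii' jj' /eqP h1 /eqP h1' /andP [/eqP h2 /eqP h2'].
have jj'F : (j == j') = false by apply/negbTE.
have j'jF : (j' == j) = false by rewrite eq_sym; apply/negbTE.
case: (ltngtP i i') => [lt|gt|eq].
- left; rewrite /aligned lt /=.
  case: (ltngtP j j') => [//|gt|/ord_inj eq]; last by rewrite eq eqxx in jj'.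
  by have := N1 lt; rewrite h1 h1' h2 h2' jj'F j'jF => /(_ gt).
- right; rewrite /aligned gt /=.
  case: (ltngtP j' j) => [//|lt'|/ord_inj eq]; last by rewrite eq eqxx in jj'.
  by have := N1 gt; rewrite h1 h1' h2 h2' jj'F j'jF => /(_ lt').
- by move: ii'; rewrite (ord_inj eq) eqxx.
Qed.

Lemma P2a i1 j1 i1' j1' i2 j2 i2' j2' :
  four_cycle s1 s2 i1 j1 i1' j1' -> aligned i1 j1 i1' j1' ->
  four_cycle s1 s2 i2 j2 i2' j2' -> aligned i2 j2 i2' j2' ->
  (i1 < i2)%N -> nested4 i2 j2 i2' j2' i1 j1 i1' j1'.
Proof.
case/and5P => _ n1 /eqP a1 /eqP a1' /andP [/eqP b1 /eqP b1'] /andP [l1 m1].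
case/and5P => _ n2 /eqP a2 /eqP a2' /andP [/eqP b2 /eqP b2'] /andP [l2 m2] lt.
have F1 : (j1 == j1') = false by apply/negbTE.
have F1' : (j1' == j1) = false by rewrite eq_sym; apply/negbTE.
have F2 : (j2 == j2') = false by apply/negbTE.
have F2' : (j2' == j2) = false by rewrite eq_sym; apply/negbTE.
have ne12 : i1 != i2 by rewrite neq_ltn lt.
have jj : (j1 < j2)%N.
  case: (ltngtP j1 j2) => [//|gt|/ord_inj eq].
    by have := N1 lt; rewrite a1 a2 b1 b2 F1 F2 => /(_ gt).
  by move: ne12; rewrite -(inj_eq (@perm_inj _ s1)) a1 a2 eq eqxx.
have jj' : (j2' < j1')%N.
  case: (ltngtP j2' j1') => [//|gt|/ord_inj eq].
    by have := N2 lt; rewrite a1 a2 b1 b2 F1 F2 => /(_ gt).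
  by move: ne12; rewrite -(inj_eq (@perm_inj _ s2)) b1 b2 eq eqxx.
have ii : (i2' < i1')%N.
  case: (ltngtP i2' i1') => [//|gt|/ord_inj eq].
    by have := N2 gt; rewrite a1' a2' b1' b2' F1' F2' => /(_ jj).
  by move: jj'; rewrite -a1' -a2' eq ltnn.
by rewrite /nested4 lt l2 ii jj m2 jj'.
Qed.

Lemma P2 i1 j1 i1' j1' i2 j2 i2' j2' :
  four_cycle s1 s2 i1 j1 i1' j1' -> aligned i1 j1 i1' j1' ->
  four_cycle s1 s2 i2 j2 i2' j2' -> aligned i2 j2 i2' j2' ->
  i1 != i2 ->
  nested4 i1 j1 i1' j1' i2 j2 i2' j2' \/ nested4 i2 j2 i2' j2' i1 j1 i1' j1'.
Proof.
move=> c1 al1 c2 al2; rewrite neq_ltn => /orP [lt|lt].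
  by right; apply: P2a.
by left; apply: P2a.
Qed.


Lemma P3 e f a b a' b' : two_cycle s1 s2 e f -> four_cycle s1 s2 a b a' b' ->
  aligned a b a' b' -> nested2 e f a b a' b'.
Proof.
case/andP => /eqP se /eqP te.
case/and5P => aa' bb' /eqP sa /eqP sa' /andP [/eqP ta /eqP ta'] /andP [lab lbb].
have ea : e != a by apply/eqP => E; move: bb'; rewrite -sa -ta -E se te eqxx.
have ea' : e != a' by apply/eqP => E; move: bb'; rewrite -sa' -ta' -E se te eqxx.
have ae : a != e by rewrite eq_sym.
have a'e : a' != e by rewrite eq_sym.
have a'a : a' != a by rewrite eq_sym.
have na : s1 a != s2 a by rewrite sa ta.
have na' : s1 a' != s2 a' by rewrite sa' ta' eq_sym.
have fb : f != b by rewrite -se -sa (inj_eq (@perm_inj _ s1)).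
have fb' : f != b' by rewrite -se -sa' (inj_eq (@perm_inj _ s1)).
have Hb : (b < f)%N.
  case: (ltngtP b f) => [//|fltb|/ord_inj E]; last by rewrite E eqxx in fb.
  exfalso; case: (ltngtP e a) => [ela|ale|/ord_inj E]; last by rewrite E eqxx in ea.
  + have HH1 : (s2 e < s2 a)%N by rewrite te ta (ltn_trans fltb lbb).
    have [c p] := swap2 s1 ela HH1.
    have HH2 : (sw s2 e a a < sw s2 e a a')%N by rewrite swy swo // te ta'.
    have [c' p'] := swap2 s1 lab HH2.
    apply: (chain3 ea ea' aa' _ na na' _ (le_trans c' c) (ltn_trans p p')).
      by move=> i ie ia ia'; rewrite !swo.
    by apply/or3P; constructor 2; rewrite swx swo // sa ta' eqxx.
  case: (ltngtP e a') => [ela'|a'le|/ord_inj E]; last by rewrite E eqxx in ea'.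
  + have HH3 : (s1 e < s1 a)%N by rewrite se sa.
    have [c p] := swap1 s2 ale HH3.
    have HH4 : (s2 e < s2 a')%N by rewrite te ta'.
    have [c' p'] := swap2 (sw s1 a e) ela' HH4.
    apply: (chain3 ea ea' aa' _ na na' _ (le_trans c' c) (ltn_trans p p')).
      by move=> i ie ia ia'; rewrite !swo.
    by apply/or3P; constructor 1; rewrite swx swy sa ta' eqxx.
  + have HH5 : (s1 e < s1 a')%N by rewrite se sa' (ltn_trans fltb lbb).
    have [c p] := swap1 s2 a'le HH5.
    have HH6 : (sw s1 a' e a' < sw s1 a' e a)%N by rewrite swx swo // se sa.
    have [c' p'] := swap1 s2 lab HH6.
    apply: (chain3 ea ea' aa' _ na na' _ (le_trans c' c) (ltn_trans p p')).
      by move=> i ie ia ia'; rewrite !swo.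
    by apply/or3P; constructor 3; rewrite swy swo // sa ta' eqxx.
have Hb' : (f < b')%N.
  case: (ltngtP f b') => [//|fgtb|/ord_inj E]; last by rewrite E eqxx in fb'.
  exfalso; case: (ltngtP e a) => [ela|ale|/ord_inj E]; last by rewrite E eqxx in ea.
  + have HH7 : (s1 a < s1 e)%N by rewrite se sa (ltn_trans lbb fgtb).
    have [c p] := swap1 s2 ela HH7.
    have HH8 : (sw s1 e a a' < sw s1 e a a)%N by rewrite swy swo // se sa'.
    have [c' p'] := swap1 s2 lab HH8.
    apply: (chain3 ea ea' aa' _ na na' _ (le_trans c' c) (ltn_trans p p')).
      by move=> i ie ia ia'; rewrite !swo.
    by apply/or3P; constructor 2; rewrite swx swo // sa' ta eqxx.
  case: (ltngtP e a') => [ela'|a'le|/ord_inj E]; last by rewrite E eqxx in ea'.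
  + have HH9 : (s1 a' < s1 e)%N by rewrite se sa'.
    have [c p] := swap1 s2 ela' HH9.
    have HH10 : (s2 a < s2 e)%N by rewrite te ta.
    have [c' p'] := swap2 (sw s1 e a') ale HH10.
    apply: (chain3 ea ea' aa' _ na na' _ (le_trans c' c) (ltn_trans p p')).
      by move=> i ie ia ia'; rewrite !swo.
    by apply/or3P; constructor 1; rewrite swx swy sa' ta eqxx.
  + have HH11 : (s2 a' < s2 e)%N by rewrite te ta'.
    have [c p] := swap2 s1 a'le HH11.
    have HH12 : (sw s2 a' e a < sw s2 a' e a')%N by rewrite swx swo // te ta.
    have [c' p'] := swap2 s1 lab HH12.
    apply: (chain3 ea ea' aa' _ na na' _ (le_trans c' c) (ltn_trans p p')).
      by move=> i ie ia ia'; rewrite !swo.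
    by apply/or3P; constructor 3; rewrite swy swo // sa' ta eqxx.
have Ha : (a < e)%N.
  case: (ltngtP a e) => [//|ela|/ord_inj E]; last by rewrite E eqxx in ae.
  by exfalso; apply: (M3 ela); rewrite ?se ?te ?sa ?ta.
have Ha' : (e < a')%N.
  case: (ltngtP e a') => [//|a'le|/ord_inj E]; last by rewrite E eqxx in ea'.
  by exfalso; apply: (M3 a'le); rewrite ?se ?te ?sa' ?ta'.
by rewrite /nested2 Ha Ha' Hb Hb'.
Qed.

End Main.
End S.

Unset Implicit Arguments.

Theorem lemma9 (R : realDomainType) (n k : nat) (A B : 'M[R]_n)
  (HA : monge A) (HB : antimonge B)
  (Hfeas : exists s1 s2 : {perm 'I_n}, feasible k s1 s2) :
  exists s1 s2 : {perm 'I_n},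
    [/\ feasible k s1 s2,
        (forall t1 t2 : {perm 'I_n}, feasible k t1 t2 ->
           recov_cost A B s1 s2 <= recov_cost A B t1 t2),
        (* all 4-cycles are aligned (for one of the two labelings of the cycle) *)
        (forall i j i' j' : 'I_n, four_cycle s1 s2 i j i' j' ->
           aligned i j i' j' \/ aligned i' j' i j),
        (* any two distinct 4-cycles are nested, one inside the other *)
        (forall i1 j1 i1' j1' i2 j2 i2' j2' : 'I_n,
           four_cycle s1 s2 i1 j1 i1' j1' -> aligned i1 j1 i1' j1' ->
           four_cycle s1 s2 i2 j2 i2' j2' -> aligned i2 j2 i2' j2' ->
           i1 != i2 ->
           nested4 i1 j1 i1' j1' i2 j2 i2' j2' \/ nested4 i2 j2 i2' j2' i1 j1 i1' j1')
      & (* every 2-cycle is nested inside every 4-cycle *)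
        (forall i j i2 j2 i2' j2' : 'I_n,
           two_cycle s1 s2 i j ->
           four_cycle s1 s2 i2 j2 i2' j2' -> aligned i2 j2 i2' j2' ->
           nested2 i j i2 j2 i2' j2')].
Proof.
move: Hfeas => [p1 [p2 Hp]].
pose P := fun p : {perm 'I_n} * {perm 'I_n} => (k <= common p.1 p.2)%N.
have P0 : P (p1, p2) by [].
have [q Pq qmin] := @arg_minP _ R _ (p1, p2) P (fun p => recov_cost A B p.1 p.2) P0.
pose Q := fun p : {perm 'I_n} * {perm 'I_n} =>
  P p && (recov_cost A B p.1 p.2 <= recov_cost A B q.1 q.2).
have Q0 : Q q by rewrite /Q Pq lexx.
case: (@arg_maxnP _ q Q (fun p => Phi p.1 p.2) Q0) => s /andP [Ps cs] smax.
have Hm : forall t1 t2, (k <= common s.1 s.2)%N -> (k <= common t1 t2)%N ->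
  recov_cost A B t1 t2 <= recov_cost A B s.1 s.2 -> (Phi t1 t2 <= Phi s.1 s.2)%N.
  move=> t1 t2 _ ft ct; apply: (smax (t1, t2)).
  by rewrite /Q /P /= ft (le_trans ct cs).
exists s.1, s.2; split.
- exact: Ps.
- by move=> t1 t2 ft; apply: le_trans cs (qmin (t1, t2) ft).
- by move=> i j i' j'; apply: (P1 HA Hm Ps).
- by move=> *; apply: (P2 HA HB Hm Ps).
- by move=> *; apply: (P3 HA HB Hm Ps).
Qed.
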